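(* Let $G$ be an abelian group and let $M,N$ be two matroids over $G$ of the same rank $n$. Let $\mathcal{M}=\{a_1,\dots,a_n\}$ be a basis of $M$. Assume that for every $J\subseteq[n]$, $$r_N\Big(\bigcap_{i\in J}\big((-a_i+E(M))\cap E(N)\big)\Big)\le n-|J|.$$ Then $\mathcal{M}$ is matched to some basis of $N$.
   Context: A matroid over $G$ is a matroid $M$ whose finite ground set $E(M)$ is a subset of $G$; all matroids are assumed loopless. $r_N$ is the rank function of $N$: $r_N(X)=\max\{|X\cap I|: I \text{ independent in } N\}$. $-a+X=\{-a+x:x\in X\}$. For bases $\mathcal{M}=\{a_1,\dots,a_n\}$ of $M$ and $\mathcal{N}=\{b_1,\dots,b_n\}$ of $N$ (with $r(M)=r(N)=n>0$), $\mathcal{M}$ is matched to $\mathcal{N}$ if there is a permutation $\pi\in S_n$ with $a_i+b_{\pi(i)}\notin E(M)$ for all $i$. *)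

(* Defs.v *)
From HB Require Import structures.
From mathcomp Require Import all_boot all_order all_algebra all_fingroup.
From mathcomp Require Import finmap.
Set Implicit Arguments. Unset Strict Implicit. Unset Printing Implicit Defensive.
Import GRing.Theory.
Local Open Scope fset_scope.
Local Open Scope ring_scope.

Record matroid (G : zmodType) := Matroid {
  ground : {fset G};
  indep : {fset G} -> bool;
  indep_sub : forall I, indep I -> I `<=` ground;
  indep0 : indep fset0;
  indep_hered : forall I J, J `<=` I -> indep I -> indep J;
  indep_aug : forall I J, indep I -> indep J -> (#|` I| < #|` J|)%N ->
     exists2 x, x \in J `\` I & indep (x |` I);
  loopless : forall x, x \in ground -> indep [fset x]
}.

Definition mrank (G : zmodType) (N : matroid G) (X : {fset G}) : nat :=
  \max_(I <- fpowerset (ground N) | indep N I) #|` X `&` I|.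

Definition mrk (G : zmodType) (N : matroid G) : nat := mrank N (ground N).

Definition is_basis (G : zmodType) (N : matroid G) (B : {fset G}) : Prop :=
  indep N B /\ forall x, x \in ground N -> x \notin B -> ~~ indep N (x |` B).

Definition shift (G : zmodType) (a : G) (X : {fset G}) : {fset G} :=
  [fset - a + x | x in X].

(* \bigcap_{i in J} ((-a_i + E(M)) ∩ E(N)); the empty intersection is E(N). *)
Definition inter_shifts (G : zmodType) (M N : matroid G) (n : nat)
    (a : 'I_n -> G) (J : {set 'I_n}) : {fset G} :=
  foldr (fun i S => S `&` (shift (a i) (ground M) `&` ground N))
        (ground N) (enum J).

Definition matched (G : zmodType) (M : matroid G) (n : nat)
    (a b : 'I_n -> G) : Prop :=
  exists pi : 'S_n, forall i, a i + b (pi i) \notin ground M.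

(* Main.v *)
Require Import Defs.
From HB Require Import structures.
From mathcomp Require Import all_boot all_order all_algebra all_fingroup.
From mathcomp Require Import finmap.
From mathcomp Require Import zify.
Local Open Scope fset_scope.

Lemma bigmax_att (I : eqType) (s : seq I) (P : pred I) (F : I -> nat) :
  \max_(i <- s | P i) F i = 0%N \/
  exists i, [/\ i \in s, P i & F i = \max_(i <- s | P i) F i].
Proof.
elim: s => [|x s [IH|[i [iS Pi Fi]]]]; first by rewrite big_nil; left.
- rewrite big_cons; case: ifP => Px; last by rewrite IH; left.
  by right; exists x; rewrite IH maxn0 mem_head.
- rewrite big_cons; case: ifP => Px; last by right; exists i; rewrite inE iS orbT.
  case: (leqP (F x) (\max_(i <- s | P i) F i)) => h.
  + by right; exists i; rewrite inE iS orbT Pi; split => //; rewrite -Fi maxnC (maxn_idPl _) // Fi.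
  + by right; exists x; rewrite mem_head Px; split => //; rewrite (maxn_idPl _) // ltnW.
Qed.

Section Rank.
Variables (G : zmodType) (N : matroid G).
Local Notation r := (mrank N).

Lemma rank_ge I X : indep N I -> I `<=` X -> (#|` I| <= r X)%N.
Proof.
move=> iI sIX; rewrite /mrank.
have -> : #|` I| = #|` X `&` I| by rewrite (fsetIidPr sIX).
by apply: leq_bigmax_seq => //; rewrite fpowersetE indep_sub.
Qed.

Lemma rank_att X : exists I, [/\ indep N I, I `<=` X & #|` I| = r X].
Proof.
case: (@bigmax_att _ (fpowerset (ground N)) (indep N) (fun I => #|` X `&` I|)) => [h|[I [_ iI h]]].
  by exists fset0; rewrite /mrank h cardfs0 fsub0set indep0.
exists (X `&` I); split => //; last by rewrite fsubsetIl.
by apply: (indep_hered (I:=I)) => //; rewrite fsubsetIr.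
Qed.

Lemma rank_mono X Y : X `<=` Y -> (r X <= r Y)%N.
Proof.
move=> sXY; case: (rank_att X) => I [iI sIX <-].
by apply: rank_ge => //; apply: fsubset_trans sXY.
Qed.

Lemma rank_card X : (r X <= #|` X|)%N.
Proof. by case: (rank_att X) => I [iI sIX <-]; apply: fsubset_leq_card. Qed.

Lemma rank_ext Z I : indep N I -> I `<=` Z ->
  exists B, [/\ indep N B, I `<=` B, B `<=` Z & #|` B| = r Z].
Proof.
case: (rank_att Z) => J [iJ sJZ hJ].
move eqk : (r Z - #|` I|)%N => k.
elim: k I eqk => [|k IH] I eqk iI sIZ.
  exists I; split => //; apply/eqP; rewrite eqn_leq rank_ge //.
  by move/eqP: eqk; rewrite subn_eq0.
have hlt : (#|` I| < #|` J|)%N by rewrite hJ; rewrite -subn_gt0 eqk.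
case: (indep_aug iI iJ hlt) => x /fsetDP [xJ xI] ixI.
case: (IH (x |` I)) => //.
- by rewrite cardfsU1 xI add1n subnS eqk.
- by rewrite fsubUset fsub1set sIZ (fsubsetP sJZ).
move=> B [iB sB sBZ hB]; exists B; split => //.
by apply: fsubset_trans sB; rewrite fsubsetU1.
Qed.

Lemma rank_submod X Y : (r (X `|` Y) + r (X `&` Y) <= r X + r Y)%N.
Proof.
case: (rank_att (X `&` Y)) => I [iI sI hI].
case: (@rank_ext (X `|` Y) _ iI) => [|B [iB sIB sBZ hB]].
  by apply: fsubset_trans sI _; apply: fsubset_trans (fsubsetIl _ _) (fsubsetUl _ _).
have e : B = (B `&` X) `|` (B `&` Y) by rewrite -fsetIUr (fsetIidPl sBZ).
have h1 : (#|` B `&` X| <= r X)%N by apply: rank_ge; rewrite ?fsubsetIr //; apply: indep_hered iB; rewrite fsubsetIl.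
have h2 : (#|` B `&` Y| <= r Y)%N by apply: rank_ge; rewrite ?fsubsetIr //; apply: indep_hered iB; rewrite fsubsetIl.
have h3 : (#|` I| <= #|` (B `&` X) `&` (B `&` Y)|)%N.
  apply: fsubset_leq_card; rewrite fsubsetI !fsubsetI sIB.
  by rewrite (fsubset_trans sI (fsubsetIl _ _)) (fsubset_trans sI (fsubsetIr _ _)).
have := cardfsUI (B `&` X) (B `&` Y); rewrite -e => h; rewrite -hB -hI.
apply: leq_trans (leq_add h1 h2); rewrite -h leq_add2l //.
Qed.

End Rank.

Section Rado.
Variables (G : zmodType) (N : matroid G) (n : nat).
Local Notation r := (mrank N).

Definition UU (A : 'I_n -> {fset G}) (J : {set 'I_n}) : {fset G} :=
  \bigcup_(i in J) A i.

Lemma memU (A : 'I_n -> {fset G}) (J : {set 'I_n}) (x : G) : reflect (exists2 i, i \in J & x \in A i) (x \in UU A J).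
Proof.
rewrite /UU; apply: (iffP (bigfcupP _ _ _ _)) => [[i /andP[_ iJ] xA]|[i iJ xA]].
  by exists i.
by exists i; rewrite ?mem_index_enum.
Qed.

Definition hallb (A : 'I_n -> {fset G}) := [forall J : {set 'I_n}, #|J| <= r (UU A J)].

Lemma card_le1_eq (A : {fset G}) x y : (#|` A| <= 1)%N -> x \in A -> y \in A -> x = y.
Proof.
move=> h xA yA; apply/eqP; apply/negPn/negP => nxy.
have : (0 < #|` A `\ x|)%N.
  by rewrite lt0n cardfs_eq0; apply/fset0Pn; exists y; rewrite !inE eq_sym nxy.
by move: h; rewrite (cardfsD1 x) xA add1n ltnS leqn0 => /eqP ->.
Qed.

Definition Arem (A : 'I_n -> {fset G}) i0 x := fun i => if i == i0 then A i0 `\ x else A i.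

Lemma Arem_sub A i0 x i : Arem A i0 x i `<=` A i.
Proof. by rewrite /Arem; case: eqP => [->|_] //; rewrite fsubDset fsubsetUr. Qed.

Lemma Arem_sum A i0 x : x \in A i0 ->
  (\sum_i #|` Arem A i0 x i| < \sum_i #|` A i|)%N.
Proof.
move=> xA; rewrite (bigD1 i0) //= [X in (_ < X)%N](bigD1 i0) //=.
rewrite /Arem eqxx (cardfsD1 x (A i0)) xA add1n addSn ltnS leq_add2l.
by rewrite leq_eqVlt; apply/orP; left; apply/eqP; apply: eq_bigr => i /negPf ->.
Qed.

Lemma Arem_in A i0 x (J : {set 'I_n}) : i0 \in J ->
  (A i0 `\ x) `|` UU A (J :\ i0) `<=` UU (Arem A i0 x) J.
Proof.
move=> iJ; apply/fsubsetP => y /fsetUP [yA|/memU [j]].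
  by apply/memU; exists i0; rewrite // /Arem eqxx.
rewrite !inE => /andP [ji jJ] yA; apply/memU; exists j => //.
by rewrite /Arem (negPf ji).
Qed.

Lemma Arem_out A i0 x (J : {set 'I_n}) : i0 \notin J -> UU A J `<=` UU (Arem A i0 x) J.
Proof.
move=> iJ; apply/fsubsetP => y /memU [j jJ yA]; apply/memU; exists j => //.
rewrite /Arem; case: eqP => // ej; by move: iJ; rewrite -ej jJ.
Qed.

Lemma hall_contra A i0 x1 x2 (J1 J2 : {set 'I_n}) :
  hallb A -> x1 != x2 -> x1 \in A i0 -> x2 \in A i0 ->
  (r (UU (Arem A i0 x1) J1) < #|J1|)%N ->
  (r (UU (Arem A i0 x2) J2) < #|J2|)%N -> False.
Proof.
move=> /forallP hA nx x1A x2A h1 h2.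
have inJ : forall x J, (r (UU (Arem A i0 x) J) < #|J|)%N -> i0 \in J.
  move=> x J h; apply/negPn/negP => iJ.
  have := leq_trans (hA J) (@rank_mono _ N _ _ (Arem_out A _ x _ iJ)).
  by rewrite leqNgt h.
have i1 := inJ _ _ h1; have i2 := inJ _ _ h2.
set K1 := J1 :\ i0; set K2 := J2 :\ i0.
set X1 := (A i0 `\ x1) `|` UU A K1; set X2 := (A i0 `\ x2) `|` UU A K2.
have r1 : (r X1 <= #|K1|)%N.
  have := leq_ltn_trans (@rank_mono _ N _ _ (Arem_in A _ x1 _ i1)) h1.
  by rewrite (cardsD1 i0 J1) i1 add1n ltnS.
have r2 : (r X2 <= #|K2|)%N.
  have := leq_ltn_trans (@rank_mono _ N _ _ (Arem_in A _ x2 _ i2)) h2.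
  by rewrite (cardsD1 i0 J2) i2 add1n ltnS.
have sU : UU A (i0 |: (K1 :|: K2)) `<=` X1 `|` X2.
  apply/fsubsetP => y /memU [j]; rewrite !inE => /orP [/eqP ->|/orP [jK|jK]] yA.
  - case: (eqVneq y x1) => [ey|ny].
      by rewrite ey nx x1A !orbT.
    by rewrite yA.
  - by apply/orP; left; apply/orP; right; apply/memU; exists j => //; rewrite /K1 !inE.
  - by apply/orP; right; apply/orP; right; apply/memU; exists j => //; rewrite /K2 !inE.
have sI : UU A (K1 :&: K2) `<=` X1 `&` X2.
  apply/fsubsetP => y /memU [j] /setIP [j1 j2] yA.
  by apply/fsetIP; split; apply/fsetUP; right; apply/memU; exists j.
have hU := leq_trans (hA _) (@rank_mono _ N _ _ sU).
have hI := leq_trans (hA _) (@rank_mono _ N _ _ sI).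
have := @rank_submod _ N X1 X2.
have c1 : #|i0 |: (K1 :|: K2)| = (#|K1 :|: K2|).+1.
  by rewrite cardsU1 !inE !eqxx /= add1n.
have c2 := cardsUI K1 K2.
move: hU hI; rewrite c1 => hU hI hS.
have := leq_add hU hI; rewrite addSn c2 => h.
have := leq_trans h hS; move=> h'; have := leq_trans h' (leq_add r1 r2).
by rewrite ltnn.
Qed.

Lemma rado_base A : hallb A -> ~~ [exists i, 1 < #|` A i|]%N ->
  exists c : 'I_n -> G,
    [/\ injective c, forall i, c i \in A i & indep N [fset c i | i in 'I_n]].
Proof.
move=> /forallP hA /existsPn hle.
have ex : forall i, exists x, x \in A i.
  move=> i; apply/fset0Pn; rewrite -cardfs_eq0 -lt0n.
  have := hA [set i]; rewrite cards1 => h.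
  apply: leq_trans h _; apply: leq_trans (@rank_card _ N _) _.
  by apply: fsubset_leq_card; apply/fsubsetP => y /memU [j]; rewrite inE => /eqP ->.
pose c := fun i => xchoose (ex i).
have cA : forall i, c i \in A i by move=> i; apply: xchooseP.
have uA : forall i y, y \in A i -> y = c i.
  by move=> i y yA; apply: (card_le1_eq _ _ _ _ yA (cA i)); rewrite leqNgt hle.
have ic : injective c.
  move=> i j eij; apply/eqP; apply/negPn/negP => nij.
  have := hA [set i; j]; rewrite cards2 nij.
  have : (r (UU A [set i; j]) <= 1)%N.
    apply: leq_trans (@rank_card _ N _) _; rewrite -(cardfs1 (c i)).
    apply: fsubset_leq_card; apply/fsubsetP => y /memU [k]; rewrite !inE.
    by case/orP => /eqP -> /uA ->; rewrite ?eij.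
  by move=> h1 h2; have := leq_trans h2 h1.
exists c; split => //.
set X := [fset c i | i in 'I_n].
have cX : #|` X| = n.
  rewrite card_imfset //= -[RHS](card_ord n) cardE.
  apply/perm_size; apply: uniq_perm; rewrite ?enum_finmem_uniq ?enum_uniq //.
have rX : (n <= r X)%N.
  have := hA [set: 'I_n]; rewrite cardsT card_ord => h; apply: leq_trans h _.
  apply: rank_mono; apply/fsubsetP => y /memU [j _ /uA ->].
  by apply: in_imfset.
case: (@rank_att _ N X) => I [iI sIX hI].
have -> : X = I.
  apply/esym/eqP; rewrite eqEfcard sIX /= hI cX //.
done.
Qed.

Lemma rado k A : (\sum_i #|` A i| <= k)%N -> hallb A ->
  exists c : 'I_n -> G,
    [/\ injective c, forall i, c i \in A i & indep N [fset c i | i in 'I_n]].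
Proof.
elim: k A => [|k IH] A hk hA;
  (case: (boolP [exists i, 1 < #|` A i|]%N) => [/existsP [i0 hi0]|hle];
   last exact: rado_base).
  by move: hk; rewrite (bigD1 i0) //= leqn0 addn_eq0 => /andP [/eqP h _]; move: hi0; rewrite h.
  have [x1 x1A] : exists x, x \in A i0.
    by apply/fset0Pn; rewrite -cardfs_eq0 -lt0n (ltn_trans _ hi0).
  have [x2 x2A] : exists x, x \in A i0 `\ x1.
    by apply/fset0Pn; rewrite -cardfs_eq0 -lt0n; move: hi0; rewrite (cardfsD1 x1) x1A add1n ltnS.
  have nx : x1 != x2 by move: x2A; rewrite !inE eq_sym => /andP [].
  have x2A' : x2 \in A i0 by move: x2A; rewrite !inE => /andP [].
  have sub : forall x, x \in A i0 -> hallb (Arem A i0 x) -> exists c : 'I_n -> G,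
    [/\ injective c, forall i, c i \in A i & indep N [fset c i | i in 'I_n]].
    move=> x xA hx; case: (IH (Arem A i0 x)) => //.
      by rewrite -ltnS; apply: leq_trans hk; apply: Arem_sum.
    move=> c [ic cA ind]; exists c; split => // i.
    exact: (fsubsetP (Arem_sub A i0 x i)).
  case: (boolP (hallb (Arem A i0 x1))) => [h|nh1]; first exact: sub _ x1A h.
  case: (boolP (hallb (Arem A i0 x2))) => [h|nh2]; first exact: sub _ x2A' h.
  move: nh1 nh2; rewrite /hallb !negb_forall => /existsP [J1 hJ1] /existsP [J2 hJ2].
  by case: (@hall_contra A i0 x1 x2 J1 J2 hA nx x1A x2A'); rewrite ltnNge.
Qed.

End Rado.

Lemma card_img (G : choiceType) n (c : 'I_n -> G) : injective c ->
  #|` [fset c i | i in 'I_n]| = n.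
Proof.
move=> ic; rewrite card_imfset //= -[RHS](card_ord n) cardE.
by apply/perm_size; apply: uniq_perm; rewrite ?enum_finmem_uniq ?enum_uniq.
Qed.

Import GRing.Theory.
Local Open Scope ring_scope.

Theorem proposition3p7 (G : zmodType) (M N : matroid G) (n : nat)
    (a : 'I_n -> G) :
  mrk M = n -> mrk N = n ->
  injective a -> is_basis M [fset a i | i in 'I_n] ->
  (forall J : {set 'I_n}, (mrank N (inter_shifts M N a J) <= n - #|J|)%N) ->
  exists b : 'I_n -> G,
    [/\ injective b, is_basis N [fset b i | i in 'I_n] & matched M a b].
Proof.
move=> rM rN ia _ hyp.
pose A := fun i => [fset y in ground N | a i + y \notin ground M].
have memA : forall i y, (y \in A i) = (y \in ground N) && (a i + y \notin ground M).
  by move=> i y; rewrite !inE.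
have hall : @hallb _ N n A.
  apply/forallP => J.
  set U := @UU _ _ A J; set D := ground N `\` U.
  have sD : D `<=` inter_shifts M N a J.
    apply/fsubsetP => y /fsetDP [yN yU].
    have hJ : forall i, i \in enum J -> a i + y \in ground M.
      move=> i; rewrite mem_enum => iJ; apply/negPn/negP => h.
      by move/negP: yU; apply; apply/memU; exists i => //; rewrite memA yN h.
    rewrite /inter_shifts; elim: (enum J) hJ => [|i s IH] hs //=.
    apply/fsetIP; split; first by apply: IH => j js; apply: hs; rewrite inE js orbT.
    apply/fsetIP; split => //.
    rewrite /shift -[X in X \in _](addKr (a i) y).
    by apply: (in_imfset _ (fun x => - a i + x)); apply: hs; rewrite mem_head.
  have h1 := leq_trans (@rank_mono _ N _ _ sD) (hyp J).
  have h2 : (n <= mrank N U + mrank N D)%N.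
    rewrite -{1}rN /mrk; apply: leq_trans (@rank_submod _ N U D).
    apply: leq_trans (leq_addr _ _); apply: rank_mono.
    apply/fsubsetP => y yN; apply/fsetUP; case: (boolP (y \in U)) => yU; first by left.
    by right; apply/fsetDP.
  have h3 : (#|J| <= n)%N by have := max_card J; rewrite card_ord.
  lia.
case: (@rado G N n _ A (leqnn _) hall) => c [ic cA ind].
exists c; split => //.
  split => // x xN xX; apply/negP => ixX.
  have := @rank_ge _ N _ (ground N) ixX (indep_sub ixX).
  by rewrite cardfsU1 xX card_img // -/(mrk N) rN add1n ltnn.
exists 1%g => i; rewrite perm1.
by have := cA i; rewrite memA => /andP [].
Qed.
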